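(* Let $X$ be a locally compact separable metrizable space, let $Z\subseteq X$ be compact, and let $\mathcal U=(\mathfrak P,\{\mathcal U_{\mathfrak p}\},\{\Phi_{\mathfrak p\mathfrak q}\})$ be an abstract good coordinate system of $Z$ in the weak sense. Then there exists a shrinking $\mathcal U^0$ of $\mathcal U$ which is an abstract good coordinate system of $Z$ in the strong sense.
   Context: An abstract K-chart of $X$ is a triple $(U,S,\psi)$ where $U$ is a locally compact separable metrizable space, $S\subseteq U$ is closed, and $\psi:S\to X$ is a homeomorphism onto an open subset of $X$. Given abstract K-charts $\mathcal U_i=(U_i,S_i,\psi_i)$ ($i=1,2$), a coordinate change from $\mathcal U_1$ to $\mathcal U_2$ is a pair $(U_{21},\varphi_{21})$ with: (1) $U_{21}\subseteq U_1$ open; (2) $\varphi_{21}:U_{21}\to U_2$ a topological embedding; (3) $S_1\cap U_{21}=\varphi_{21}^{-1}(S_2)$ and $\psi_2\circ\varphi_{21}=\psi_1$ on $S_1\cap U_{21}$; (4) $\psi_1(S_1\cap U_{21})=\psi_1(S_1)\cap\psi_2(S_2)$. An abstract good coordinate system of $Z$ in the weak sense is $(\mathfrak P,\{\mathcal U_{\mathfrak p}\},\{\Phi_{\mathfrak p\mathfrak q}\})$ where: (1) $\mathfrak P$ is a finite partially ordered set; (2) each $\mathcal U_{\mathfrak p}=(U_{\mathfrak p},S_{\mathfrak p},\psi_{\mathfrak p})$ is an abstract K-chart; (3) for $\mathfrak q\le\mathfrak p$, $\Phi_{\mathfrak p\mathfrak q}=(U_{\mathfrak p\mathfrak q},\varphi_{\mathfrak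 p\mathfrak q})$ is a coordinate change from $\mathcal U_{\mathfrak q}$ to $\mathcal U_{\mathfrak p}$, with $U_{\mathfrak p\mathfrak p}=U_{\mathfrak p}$ and $\varphi_{\mathfrak p\mathfrak p}=\mathrm{id}$; (4) if $\mathfrak r\le\mathfrak q\le\mathfrak p$ then $\varphi_{\mathfrak p\mathfrak r}=\varphi_{\mathfrak p\mathfrak q}\circ\varphi_{\mathfrak q\mathfrak r}$ on $\varphi_{\mathfrak q\mathfrak r}^{-1}(U_{\mathfrak p\mathfrak q})\cap U_{\mathfrak p\mathfrak r}$; (5) if $\psi_{\mathfrak p}(S_{\mathfrak p})\cap\psi_{\mathfrak q}(S_{\mathfrak q})\neq\emptyset$ then $\mathfrak p\le\mathfrak q$ or $\mathfrak q\le\mathfrak p$; (6) $\bigcup_{\mathfrak p}\psi_{\mathfrak p}(S_{\mathfrak p})\supseteq Z$. On $\coprod_{\mathfrak p}U_{\mathfrak p}$ define a relation $\sim$: for $x\in U_{\mathfrak p}$, $y\in U_{\mathfrak q}$, $x\sim y$ iff (a) $\mathfrak p=\mathfrak q$ and $x=y$, or (b) $\mathfrak p\le\mathfrak q$, $x\in U_{\mathfrak q\mathfrak p}$ and $y=\varphi_{\mathfrak q\mathfrak p}(x)$, or (c) $\mathfrak q\le\mathfrak p$, $y\in U_{\mathfrak p\mathfrak q}$ and $x=\varphi_{\mathfrak p\mathfrak q}(y)$. The system is an abstract good coordinate system of $Z$ in the strong sense if it is one in the weak sense and moreover (7) $\sim$ is an equivalence relation and (8) the quotient $(\coprod_{\mathfrak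 p}U_{\mathfrak p})/\sim$ with the quotient topology is Hausdorff. For an open subset $V$ of a separable metrizable space $U$, write $V\Subset U$ ($V$ is a shrinking of $U$) if the closure of $V$ in $U$ is compact. For an abstract K-chart $\mathcal U=(U,S,\psi)$ and open $U_0\subseteq U$, $\mathcal U|_{U_0}=(U_0,S\cap U_0,\psi|_{S\cap U_0})$; it is a shrinking of $\mathcal U$ if $U_0\Subset U$. An abstract good coordinate system $\mathcal U^0=(\mathfrak P,\{\mathcal U^0_{\mathfrak p}\},\{\Phi^0_{\mathfrak p\mathfrak q}\})$ of $Z$ in the weak sense (same $\mathfrak P$) is a shrinking of $\mathcal U$ if each $\mathcal U^0_{\mathfrak p}$ is a shrinking of $\mathcal U_{\mathfrak p}$, and for $\mathfrak q\le\mathfrak p$ the domain of $\Phi^0_{\mathfrak p\mathfrak q}$ is a shrinking ($\Subset$) of the domain $U_{\mathfrak p\mathfrak q}$ of $\Phi_{\mathfrak p\mathfrak q}$ and $\varphi^0_{\mathfrak p\mathfrak q}$ is the restriction of $\varphi_{\mathfrak p\mathfrak q}$. *)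

(* Defs.v *)
From mathcomp Require Import all_boot all_order all_algebra.
From mathcomp Require Import all_classical all_reals all_analysis.
Set Implicit Arguments. Unset Strict Implicit. Unset Printing Implicit Defensive.
Import Order.TTheory GRing.Theory Num.Theory.
Local Open Scope classical_set_scope.

(* D is locally compact as a subspace: each point of D has a compact
   neighbourhood in D. (Compactness in the subspace = compactness in T
   of a subset of D.) *)
Definition sub_locally_compact (T : topologicalType) (D : set T) : Prop :=
  forall x, D x -> exists K : set T, exists O : set T,
    [/\ K `<=` D, compact K, open O, O x & D `&` O `<=` K].

Definition sub_separable (T : topologicalType) (D : set T) : Prop :=
  exists C : set T, [/\ countable C, C `<=` D & D `<=` closure C].

Definition rel_open (T : topologicalType) (D A : set T) : Prop :=
  exists O : set T, open O /\ A = D `&` O.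

Definition rel_closed (T : topologicalType) (D A : set T) : Prop :=
  exists C : set T, closed C /\ A = D `&` C.

Definition embedding_on (T T' : topologicalType) (f : T -> T') (D : set T)
  : Prop :=
  [/\ {in D &, injective f},
      {within D, continuous f} &
      forall O : set T, open O ->
        exists O' : set T', open O' /\ f @` (D `&` O) = f @` D `&` O'].

(* Abstract K-chart (U, S, psi) of X.  The space U is represented as a
   subset D of an ambient space T (a metric space, so U is metrizable);
   S is a subset of T, psi : T -> X is only relevant on S. *)
Definition KChart (T : topologicalType) (X : topologicalType)
  (D : set T) (S : set T) (psi : T -> X) : Prop :=
  [/\ sub_locally_compact D, sub_separable D,
      (S `<=` D /\ rel_closed D S),
      embedding_on psi S & open (psi @` S)].

Definition coord_change (T1 T2 X : topologicalType)
  (D1 S1 : set T1) (psi1 : T1 -> X) (D2 S2 : set T2) (psi2 : T2 -> X)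
  (W : set T1) (phi : T1 -> T2) : Prop :=
  [/\ (W `<=` D1 /\ rel_open D1 W),
      (phi @` W `<=` D2 /\ embedding_on phi W),
      (S1 `&` W = W `&` phi @^-1` S2 /\
       forall x, S1 x -> W x -> psi2 (phi x) = psi1 x) &
      psi1 @` (S1 `&` W) = psi1 @` S1 `&` psi2 @` S2].

Section GCS.
Local Unset Implicit Arguments.
Context (R : realType) (dP : Order.disp_t) (P : finPOrderType dP)
  (T : P -> pseudoMetricType R) (X : pseudoMetricType R) (Z : set X)
  (D : forall p, set (T p)) (S : forall p, set (T p))
  (psi : forall p, T p -> X)
  (W : forall p q : P, set (T q)) (phi : forall p q : P, T q -> T p).

Definition gcs_weak : Prop :=
  [/\ (forall p : P, KChart (D p) (S p) (psi p)),
      (forall p q : P, (q <= p)%O ->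
         coord_change (D q) (S q) (psi q) (D p) (S p) (psi p)
                      (W p q) (phi p q)),
      (forall p : P, W p p = D p /\ forall x, D p x -> phi p p x = x),
      (forall p q r : P, (r <= q)%O -> (q <= p)%O ->
         forall x, W q r x -> W p q (phi q r x) -> W p r x ->
           phi p r x = phi p q (phi q r x)) &
      ((forall p q : P, psi p @` S p `&` psi q @` S q !=set0 ->
         (p <= q)%O \/ (q <= p)%O) /\
      Z `<=` [set z | exists p : P, (psi p @` S p) z])].

Definition in_union (x : {p : P & T p}) : Prop := D (projT1 x) (projT2 x).

Definition gcs_rel (x y : {p : P & T p}) : Prop :=
  x = y \/
  ((projT1 x <= projT1 y)%O /\ W (projT1 y) (projT1 x) (projT2 x) /\
     projT2 y = phi (projT1 y) (projT1 x) (projT2 x)) \/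
  ((projT1 y <= projT1 x)%O /\ W (projT1 x) (projT1 y) (projT2 y) /\
     projT2 x = phi (projT1 x) (projT1 y) (projT2 y)).

Definition union_open (A : set {p : P & T p}) : Prop :=
  A `<=` in_union /\
  forall p, rel_open (D p) [set u | A (existT _ p u)].

Definition saturated (A : set {p : P & T p}) : Prop :=
  forall a b, in_union a -> in_union b -> A a -> gcs_rel a b -> A b.

(* (7): ~ is an equivalence relation on the disjoint union (reflexivity
   and symmetry hold by definition). *)
Definition gcs_equiv : Prop :=
  forall x y z, in_union x -> in_union y -> in_union z ->
    gcs_rel x y -> gcs_rel y z -> gcs_rel x z.

(* (8): the quotient is Hausdorff: distinct classes are separated by
   disjoint open sets of the quotient, i.e. by disjoint saturated open
   subsets of the disjoint union (open sets of the quotient topology are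
   exactly the images of saturated open sets). *)
Definition gcs_quotient_hausdorff : Prop :=
  forall x y, in_union x -> in_union y -> ~ gcs_rel x y ->
    exists A B : set {p : P & T p},
      [/\ (union_open A /\ saturated A), (union_open B /\ saturated B),
          A x, B y & A `&` B = set0].

Definition gcs_strong : Prop :=
  [/\ gcs_weak, gcs_equiv & gcs_quotient_hausdorff].

End GCS.
Arguments gcs_weak {R dP P T X} Z D S psi W phi.
Arguments in_union {R dP P T} D x.
Arguments gcs_rel {R dP P T} W phi x y.
Arguments union_open {R dP P T} D A.
Arguments saturated {R dP P T} D W phi A.
Arguments gcs_equiv {R dP P T} D W phi.
Arguments gcs_quotient_hausdorff {R dP P T} D W phi.
Arguments gcs_strong {R dP P T X} Z D S psi W phi.

(* V is a shrinking of the subspace U: V open in U and the closure of V in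
   U (= closure V `&` U) is compact. *)
Definition shrinking_of (T : topologicalType) (V U : set T) : Prop :=
  [/\ V `<=` U, rel_open U V & compact (closure V `&` U)].

(* Main.v *)
Require Import Defs.
From mathcomp Require Import all_boot all_order all_algebra.
From mathcomp Require Import all_classical all_reals all_analysis.
From mathcomp Require Import zify.
From Stdlib Require Import Eqdep_dec.
Set Implicit Arguments. Unset Strict Implicit. Unset Printing Implicit Defensive.
Import Order.TTheory GRing.Theory Num.Theory.
Local Open Scope classical_set_scope.
Local Open Scope ring_scope.

Section TopHelpers.
Context {T U : topologicalType}.

Lemma hsep (x y : T) : hausdorff_space T -> x <> y ->
  exists A B, [/\ nbhs x A, nbhs y B & forall z, A z -> B z -> False].
Proof.
move=> hT xy; apply: contrapT => H; apply: xy; apply: hT => A B nA nB.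
apply: contrapT => /set0P/negP; rewrite negbK => /eqP AB0.
by apply: H; exists A, B; split => // z Az Bz; have : (A `&` B) z by []; rewrite AB0.
Qed.

Lemma within_nbhs (f : T -> U) (S : set T) x B :
  {within S, continuous f} -> S x -> nbhs (f x) B ->
  nbhs x [set z | S z -> B (f z)].
Proof.
move=> /subspace_continuousP cf Sx nB; have := cf x Sx _ nB.
by rewrite /within /=.
Qed.

Lemma open_cont_at (f : T -> U) (W : set T) x :
  open W -> {within W, continuous f} -> W x -> {for x, continuous f}.
Proof.
move=> oW; rewrite (continuous_open_subspace f oW) => cf Wx.
by apply: cf; rewrite inE.
Qed.

Lemma cont_nbhs (f : T -> U) x B :
  {for x, continuous f} -> nbhs (f x) B -> nbhs x (f @^-1` B).
Proof. by move=> cf nB; exact: cf. Qed.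

Lemma cpt_pre (f : T -> U) (A S : set T) (B : set U) :
  compact A -> A `<=` S -> {within S, continuous f} -> closed B ->
  compact (A `&` f @^-1` B).
Proof.
move=> cA AS cf cB.
suff -> : A `&` f @^-1` B = A `&` closure (A `&` f @^-1` B).
  by apply: compact_closedI => //; exact: closed_closure.
apply/seteqP; split => x [Ax Hx]; split => //.
  exact: subset_closure.
apply: contrapT => nB.
have oC : open (~` B) by exact: closed_openC.
have nC : nbhs (f x) (~` B) by apply: open_nbhs_nbhs; split.
have := within_nbhs cf (AS _ Ax) nC.
move=> /Hx [z [[Az Bz] Mz]]; exact: (Mz (AS _ Az) Bz).
Qed.

End TopHelpers.

Lemma mem_bigU (I : eqType) (T : Type) (F : I -> set T) (s : seq I) (P : pred I) x :
  (\big[setU/set0]_(i <- s | P i) F i) x <-> exists i, [/\ i \in s, P i & F i x].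
Proof.
elim: s => [|i s IH].
  by rewrite big_nil; split => [//|[i []]]; rewrite in_nil.
rewrite big_cons; split.
  case: ifP => Pi.
    case=> [Fx|/IH [j [js Pj Fj]]]; first by exists i; rewrite mem_head.
    by exists j; rewrite in_cons js orbT.
  by move=> /IH [j [js Pj Fj]]; exists j; rewrite in_cons js orbT.
move=> [j [+ Pj Fj]]; rewrite in_cons => /orP [/eqP Eji|js].
  by subst j; rewrite Pj; left.
case: ifP => _; last by apply/IH; exists j.
by right; apply/IH; exists j.
Qed.

Lemma open_bigU (I : Type) (T : topologicalType) (F : I -> set T) (s : seq I) (P : pred I) :
  (forall i, P i -> open (F i)) -> open (\big[setU/set0]_(i <- s | P i) F i).
Proof. by move=> oF; elim/big_ind: _ => //; [exact: open0|exact: openU]. Qed.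

Lemma fin_cover (X : topologicalType) (I : eqType) (K : set X) (D : set I) (f : I -> set X) :
  compact K -> (forall i, D i -> open (f i)) ->
  (forall x, K x -> exists2 i, D i & f i x) ->
  exists s : seq I, forall x, K x -> exists i, [/\ i \in s, D i & f i x].
Proof.
move=> /compact_near_coveringP cK oF cov.
pose F : set_system (seq I) := filter_from [set: seq I] (fun s0 : seq I => [set s : seq I | {subset s0 <= s}]).
have FF : Filter F.
  apply: filter_from_filter; first by exists [::].
  move=> s0 s1 _ _; exists (s0 ++ s1) => // s H; split => i Hi; apply: H;
    by rewrite mem_cat Hi ?orbT.
have := cK (seq I) F (fun s y => exists i, [/\ i \in s, D i & f i y]) FF.
case.
- move=> y Ky; have [i Di fiy] := cov y Ky.
  exists (f i, [set s : seq I | i \in s]); first split.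
  + by apply: open_nbhs_nbhs; split => //=; exact: oF.
  + by exists [:: i] => //= s H; apply: H; rewrite mem_head.
  + by move=> [y' s] /= [fy' si]; exists i.
- move=> s0 _ /(_ s0 (fun i => id)) H; exists s0 => x Kx; exact: H.
Qed.

Section Metric.
Context {R : realType} {T : pseudoMetricType R}.

Lemma closure_ball (x : T) (r : R) : 0 < r -> closure (ball x r) `<=` ball x (r + r).
Proof.
move=> r0 y cy; have [z [bxz byz]] := cy _ (nbhsx_ballx y r r0).
by apply: (ball_triangle bxz); apply: ball_sym.
Qed.

Lemma nbhd_cpt (L W : set T) :
  hausdorff_space T -> sub_locally_compact (@setT T) ->
  compact L -> open W -> L `<=` W ->
  exists G, [/\ open G, L `<=` G, closure G `<=` W & compact (closure G)].
Proof.
move=> hT lc cL oW LW.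
have pt : forall x, exists N : set T, L x ->
    [/\ open N, N x, closure N `<=` W & compact (closure N)].
  move=> x; case: (pselect (L x)) => Lx; last by exists set0.
  have [K [Oo [_ cK oO Ox OK]]] := lc x I.
  have nW : nbhs x W by apply: open_nbhs_nbhs; split => //; exact: LW.
  have [d eW] := nbhs_ex nW; set e := d%:num in eW.
  have e0 : 0 < e by rewrite /e.
  have e20 : 0 < e / 2 by rewrite divr_gt0.
  exists (Oo `&` (ball x (e / 2))°) => _; split.
  - by apply: openI => //; exact: open_interior.
  - split => //; exact: nbhsx_ballx e20.
  - move=> y /(closureS (@subIsetr _ _ _)) /(closureS (@interior_subset _ _)).
    by move=> /(closure_ball e20); rewrite -splitr => /eW.
  - apply: (subclosed_compact (@closed_closure _ _) cK).
    have cK' : closed K by exact: compact_closed.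
    move=> y /(closureS (@subIsetl _ _ _)) /(closureS (A := Oo) (B := K)).
    by rewrite -(closure_id K).1 //; apply => z Oz; apply: OK.
have [f fP] := choice pt.
have [s sc] := fin_cover cL (f := f) (fun i Li => let: And4 o _ _ _ := fP i Li in o)
  (fun x Lx => ex_intro2 _ _ x Lx (let: And4 _ h _ _ := fP x Lx in h)).
set G := \big[setU/set0]_(i <- s | `[< L i >]) f i.
set Gc := \big[setU/set0]_(i <- s | `[< L i >]) closure (f i).
have cGc : compact Gc.
  by apply: bigsetU_compact => i /asboolP Li; case: (fP i Li).
have clGc : closed Gc by exact: compact_closed.
have GGc : closure G `<=` Gc.
  rewrite (closure_id Gc).1 //; apply: closureS => x /mem_bigU [i [si Li fx]].
  by apply/mem_bigU; exists i; split => //; exact: subset_closure.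
exists G; split.
- by apply: open_bigU => i /asboolP Li; case: (fP i Li).
- move=> x /sc [i [si Li fx]]; apply/mem_bigU; exists i; split => //.
  exact/asboolP.
- move=> x /GGc /mem_bigU [i [si /asboolP Li fx]].
  by case: (fP i Li) => _ _ + _; apply.
- exact: (subclosed_compact (@closed_closure _ _) cGc).
Qed.

End Metric.

Definition freq1 {Y : topologicalType} (s : nat -> Y) (y : Y) :=
  forall A, nbhs y A -> forall N, exists2 n, (N <= n)%N & A (s n).
Definition freq2 {Y1 Y2 : topologicalType} (s1 : nat -> Y1) (s2 : nat -> Y2) (y1 : Y1) (y2 : Y2) :=
  forall A B, nbhs y1 A -> nbhs y2 B -> forall N,
    exists2 n, (N <= n)%N & A (s1 n) /\ B (s2 n).

Lemma cpt_freq1 {Y : topologicalType} (K : set Y) (s : nat -> Y) :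
  compact K -> (forall n, K (s n)) -> exists2 y, K y & freq1 s y.
Proof.
move=> cK Ks; have FK : (s @ \oo) K by apply: filterS (nbhs_infty_ge 0) => n _; exact: Ks.
have [y [Ky cy]] := cK (s @ \oo) _ FK.
exists y => // A nA N.
have : (s @ \oo) (s @` [set n | (N <= n)%N]).
  by apply: filterS (nbhs_infty_ge N) => n Nn; exists n.
move=> /cy /(_ nA) [_ [[n Nn <-] An]]; by exists n.
Qed.

Lemma cpt_freq2 {Y1 Y2 : topologicalType} (K1 : set Y1) (K2 : set Y2) s1 s2 :
  compact K1 -> compact K2 -> (forall n, K1 (s1 n)) -> (forall n, K2 (s2 n)) ->
  exists y1 y2, [/\ K1 y1, K2 y2 & freq2 s1 s2 y1 y2].
Proof.
move=> c1 c2 K1s K2s.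
have [[y1 y2] [Ky1 Ky2] fy] := cpt_freq1 (compact_setX c1 c2)
  (s := fun n => (s1 n, s2 n)) (fun n => conj (K1s n) (K2s n)).
exists y1, y2; split => // A B nA nB N.
have nAB : nbhs (y1, y2) (A `*` B) by exists (A, B).
by have [n Nn [/= An Bn]] := fy _ nAB N; exists n.
Qed.

Lemma freq2_1 {Y1 Y2 : topologicalType} (s1 : nat -> Y1) (s2 : nat -> Y2) y1 y2 :
  freq2 s1 s2 y1 y2 -> freq1 s1 y1.
Proof. by move=> f A nA N; have [n Nn [An _]] := f A setT nA filterT N; exists n. Qed.

Lemma freq2_2 {Y1 Y2 : topologicalType} (s1 : nat -> Y1) (s2 : nat -> Y2) y1 y2 :
  freq2 s1 s2 y1 y2 -> freq1 s2 y2.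
Proof. by move=> f A nA N; have [n Nn [_ An]] := f setT A filterT nA N; exists n. Qed.

Lemma freq1_closed {Y U : topologicalType} (s : nat -> Y) y (g : Y -> U) (F : set U) :
  freq1 s y -> {for y, continuous g} -> closed F -> (forall n, F (g (s n))) -> F (g y).
Proof.
move=> fr cg cF Fs; rewrite (closure_id F).1 // => B nB.
have [n _ Bn] := fr _ (cont_nbhs cg nB) 0%N; by exists (g (s n)).
Qed.

Section Eps.
Context {R : realType}.
Definition eps (n : nat) : R := n.+1%:R^-1.

Lemma eps_gt0 n : 0 < eps n.
Proof. by rewrite invr_gt0 ltr0n. Qed.

Lemma eps_anti n m : (n <= m)%N -> eps m <= eps n.
Proof. by move=> nm; rewrite lef_pV2 ?posrE ?ltr0n // ler_nat. Qed.

Lemma eps_small (r : R) : 0 < r -> exists N, eps N < r.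
Proof.
move=> r0; exists (Num.truncn (r^-1)); rewrite /eps.
rewrite invf_plt ?posrE ?ltr0n //; exact: truncnS_gt.
Qed.

Lemma lim_closure {Y : topologicalType} {T : pseudoMetricType R} (s : nat -> Y) y
   (g : Y -> T) (C : set T) :
  freq1 s y -> {for y, continuous g} ->
  (forall n, exists2 c, C c & ball c (eps n + eps n) (g (s n))) ->
  closure C (g y).
Proof.
move=> fr cg H B nB; have [d dB] := nbhs_ex nB.
set r := d%:num / 2.
have r0 : 0 < r by rewrite divr_gt0.
have [N epsN] := eps_small (divr_gt0 r0 (ltr0n R 2)).
have [n Nn bn] := fr _ (cont_nbhs cg (nbhsx_ballx (g y) r r0)) N.
have [c Cc bc] := H n; exists c; split => //; apply: dB.
have := ball_triangle bn (ball_sym bc).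
apply: le_ball.
have e1 : eps n + eps n <= r.
  rewrite [X in _ <= X]splitr; apply: lerD; apply: ltW;
    exact: le_lt_trans (eps_anti Nn) epsN.
by apply: (le_trans (lerD (lexx r) e1)); rewrite /r -splitr.
Qed.
End Eps.

Lemma fin_max (I : finType) (Q : I -> nat -> Prop) :
  (forall i n m, (n <= m)%N -> Q i n -> Q i m) ->
  (forall i, exists n, Q i n) -> exists n, forall i, Q i n.
Proof.
move=> mono ex; have [f fP] := choice ex.
exists (\max_i f i) => i; apply: (mono i (f i)) => //; exact: leq_bigmax.
Qed.

Lemma emb_sub (T1 T2 : topologicalType) (f : T1 -> T2) (D U : set T1) :
  embedding_on f D -> open U -> embedding_on f (D `&` U).
Proof.
case=> inj cf om oU; split.
- move=> x y /set_mem [Dx _] /set_mem [Dy _]; apply: inj; exact: mem_set.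
- exact: continuous_subspaceW cf.
- move=> V oV; have [V1 [oV1 e]] := om (V `&` U) (openI oV oU).
  exists V1; split => //; apply/seteqP; split.
  + move=> _ [x [[Dx Ux] Vx] <-]; split; first by exists x.
    have : (f @` (D `&` (V `&` U))) (f x) by exists x.
    by rewrite e => -[].
  + move=> _ [[x [Dx Ux] <-] V1x].
    have : (f @` D `&` V1) (f x) by split => //; exists x.
    by rewrite -e => -[x' [Dx' [Vx' Ux']] <-]; exists x'.
Qed.

Lemma slc_open (R : realType) (T : pseudoMetricType R) (U : set T) :
  hausdorff_space T -> sub_locally_compact (@setT T) -> open U ->
  sub_locally_compact U.
Proof.
move=> hT lc oU x Ux.
have [G [oG xG GU cG]] := nbhd_cpt hT lc (@compact_set1 _ x) oU (fun y (e : [set x] y) => eq_ind_r U Ux e).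
exists (closure G), G; split => //.
- by apply: xG.
- by move=> y [_ Gy]; exact: subset_closure.
Qed.

Lemma sep_open (T : topologicalType) (U : set T) :
  sub_separable (@setT T) -> open U -> sub_separable U.
Proof.
case=> C [cC _ dC] oU; exists (C `&` U); split.
- by apply: sub_countable cC; apply: subset_card_le => x [].
- by move=> x [].
- move=> x Ux B nB.
  have nBU : nbhs x (B `&` U) by apply: filterI => //; apply: open_nbhs_nbhs.
  have [c [Cc [Bc Uc]]] := dC x I _ nBU.
  by exists c.
Qed.

Lemma cc_restrict (T1 T2 X : topologicalType) (S1 : set T1) (psi1 : T1 -> X)
  (S2 : set T2) (psi2 : T2 -> X) (Wd : set T1) (f : T1 -> T2)
  (U1 : set T1) (U2 : set T2) (W' : set T1) :
  coord_change setT S1 psi1 setT S2 psi2 Wd f ->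
  open W' -> W' `<=` U1 `&` Wd `&` f @^-1` U2 ->
  (forall x y, S1 x -> U1 x -> S2 y -> U2 y -> psi1 x = psi2 y -> W' x) ->
  coord_change U1 (S1 `&` U1) psi1 U2 (S2 `&` U2) psi2 W' f.
Proof.
case=> [[_ _] [_ emb] [SW cmp] img] oW' sub cplt.
have sW : W' `<=` Wd by move=> x /sub [[]].
split.
- split; first by move=> x /sub [[]].
  exists W'; split => //; apply/seteqP; split => x; first by move=> h; split => //; case: (sub x h) => [[]].
  by case.
- split; first by move=> _ [x /sub [_ h] <-].
  have eW : W' = Wd `&` W' by apply/esym/setIidr.
  by rewrite eW; apply: emb_sub.
- split.
  + apply/seteqP; split => x.
    * move=> [[S1x U1x] W'x]; split => //.
      have : (S1 `&` Wd) x by split => //; exact: sW.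
      rewrite SW => -[_ S2fx]; split => //; by case: (sub x W'x).
    * move=> [W'x [S2fx U2fx]]; split => //; split; last by case: (sub x W'x) => [[]].
      have : (Wd `&` f @^-1` S2) x by split => //; exact: sW.
      by rewrite -SW => -[].
  + by move=> x [S1x _] W'x; apply: cmp => //; exact: sW.
- apply/seteqP; split.
  + move=> _ [x [[S1x U1x] W'x] <-]; split; first by exists x.
    have Wx := sW _ W'x.
    have : (S1 `&` Wd) x by [].
    rewrite SW => -[_ S2fx]; exists (f x); last exact: cmp.
    by split => //; case: (sub x W'x).
  + move=> _ [[x [S1x U1x] <-] [y [S2y U2y] e]].
    by exists x => //; split => //; apply: (cplt x y) => //; rewrite e.
Qed.

Lemma sep_cpt (R : realType) (T : pseudoMetricType R) (A B : set T) :
  hausdorff_space T -> sub_locally_compact (@setT T) ->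
  compact A -> compact B -> A `&` B = set0 ->
  exists VA VB, [/\ open VA, open VB, A `<=` VA, B `<=` VB & VA `&` VB = set0].
Proof.
move=> hT lc cA cB AB.
have [G [oG AG _ cG]] := nbhd_cpt hT lc cA openT (@subsetT _ A).
have AGi : A `<=` (closure G)°.
  move=> x /AG Gx; apply: (@filterS _ _ _ G); first exact: subset_closure.
  exact: open_nbhs_nbhs.
have := compact_normal_local hT cG AGi (compact_closed hT cA).
have nB : set_nbhs A (~` B).
  apply/set_nbhsP; exists (~` B); split => //.
  - exact: closed_openC (compact_closed hT cB).
  - by move=> x Ax Bx; have : (A `&` B) x by []; rewrite AB.
move=> /(_ _ nB) [V /set_nbhsP [V1 [oV1 AV1 V1V]] clV].
exists V1, (~` closure V); split => //.
- exact: closed_openC (@closed_closure _ _).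
- by move=> x Bx clx; have := clV _ clx.
- apply/seteqP; split => // x [V1x]; apply; apply: subset_closure; exact: V1V.
Qed.

Section Main.
Local Unset Implicit Arguments.
Variables (R : realType) (dP : Order.disp_t) (P : finPOrderType dP)
  (T : P -> pseudoMetricType R) (X : pseudoMetricType R) (Z : set X)
  (S : forall p, set (T p)) (psi : forall p, T p -> X)
  (W : forall p q : P, set (T q)) (phi : forall p q : P, T q -> T p).
Hypotheses (hX : hausdorff_space X) (hT : forall p, hausdorff_space (T p))
  (cZ : compact Z) (gw : gcs_weak Z (fun p => @setT (T p)) S psi W phi).

Lemma KC (p : P) : KChart (@setT (T p)) (S p) (psi p). Proof. by case: gw. Qed.
Lemma CC {p q : P} : (q <= p)%O -> coord_change setT (S q) (psi q) setT (S p) (psi p) (W p q) (phi p q).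
Proof. by case: gw => _ H _ _ _; exact: H. Qed.
Lemma Wpp p : W p p = setT. Proof. by case: gw => _ _ H _ _; case: (H p). Qed.
Lemma phipp p x : phi p p x = x. Proof. by case: gw => _ _ H _ _; case: (H p) => _; apply. Qed.
Lemma cocycle p q r : (r <= q)%O -> (q <= p)%O ->
  forall x, W q r x -> W p q (phi q r x) -> W p r x ->
    phi p r x = phi p q (phi q r x).
Proof. by case: gw => _ _ _ H _; exact: H. Qed.
Lemma CMP p q : psi p @` S p `&` psi q @` S q !=set0 -> (p <= q)%O \/ (q <= p)%O.
Proof. by case: gw => _ _ _ _ [H _]; exact: H. Qed.
Lemma COV : Z `<=` [set z | exists p : P, (psi p @` S p) z].
Proof. by case: gw => _ _ _ _ [_ H]. Qed.

Lemma lcT p : sub_locally_compact (@setT (T p)). Proof. by case: (KC p). Qed.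
Lemma sepT p : sub_separable (@setT (T p)). Proof. by case: (KC p). Qed.
Lemma clS p : closed (S p).
Proof. case: (KC p) => _ _ [_ [C [cC ->]]] _ _; by rewrite setTI. Qed.
Lemma emb_psi p : embedding_on (psi p) (S p). Proof. by case: (KC p). Qed.
Lemma inj_psi {p} : {in S p &, injective (psi p)}. Proof. by case: (emb_psi p). Qed.
Lemma cont_psi {p} : {within S p, continuous (psi p)}. Proof. by case: (emb_psi p). Qed.
Lemma oV p : open (psi p @` S p). Proof. by case: (KC p). Qed.

Section Pair.
Context {p q : P} (qp : (q <= p)%O).
Lemma oW : open (W p q).
Proof. by case: (CC qp) => -[_ [V1 [oO ->]]] _ _ _; rewrite setTI. Qed.
Lemma emb_phi : embedding_on (phi p q) (W p q). Proof. by case: (CC qp) => _ []. Qed.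
Lemma inj_phi : {in W p q &, injective (phi p q)}. Proof. by case: emb_phi. Qed.
Lemma cont_phi : {within W p q, continuous (phi p q)}. Proof. by case: emb_phi. Qed.
Lemma SW : S q `&` W p q = W p q `&` phi p q @^-1` S p. Proof. by case: (CC qp) => _ _ []. Qed.
Lemma compat x : S q x -> W p q x -> psi p (phi p q x) = psi q x.
Proof. by case: (CC qp) => _ _ [_ H] _; exact: H. Qed.
Lemma imgW : psi q @` (S q `&` W p q) = psi q @` S q `&` psi p @` S p.
Proof. by case: (CC qp). Qed.
Lemma SWS x : S q x -> W p q x -> S p (phi p q x).
Proof. by move=> Sx Wx; have [] : (W p q `&` phi p q @^-1` S p) x by rewrite -SW. Qed.
Lemma SWS' x : W p q x -> S p (phi p q x) -> S q x.
Proof. by move=> Wx Sx; have [] : (S q `&` W p q) x by rewrite SW. Qed.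
Lemma inW x y : S q x -> S p y -> psi q x = psi p y -> W p q x.
Proof.
move=> Sx Sy e.
have : (psi q @` (S q `&` W p q)) (psi q x) by rewrite imgW; split; exists x + exists y.
by case=> x0 [Sx0 Wx0] /(inj_psi _ _ (mem_set Sx0) (mem_set Sx)) <-.
Qed.
Lemma cont_at_phi x : W p q x -> {for x, continuous (phi p q)}.
Proof. exact: (open_cont_at oW cont_phi). Qed.
End Pair.

Lemma exC : exists C : forall p, set (T p),
  (forall p, compact (C p) /\ C p `<=` S p) /\
  (forall z, Z z -> exists p, (psi p @` C p) z).
Proof.
have loc : forall p z, exists pr : set X * set (T p), (psi p @` S p) z ->
   [/\ open pr.1, pr.1 z, compact pr.2, pr.2 `<=` S p & pr.1 `<=` psi p @` pr.2].
  move=> p z; case: (pselect ((psi p @` S p) z)); last first.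
    by move=> h; exists (set0, set0).
  case=> s Ss <-.
  have [K [Ob [_ cK oO Os OK]]] := lcT p s I.
  case: (emb_psi p) => _ _ /(_ Ob oO) [V' [oV' eV']].
  exists (psi p @` S p `&` V', K `&` S p) => _; split => /=.
  - by apply: openI => //; exact: oV.
  - have h : (psi p @` (S p `&` Ob)) (psi p s) by exists s.
    by rewrite eV' in h.
  - by apply: compact_closedI => //; exact: clS.
  - by move=> ? [].
  - move=> w Hw; have : (psi p @` S p `&` V') w by [].
    by rewrite -eV' => -[t [St Ot] <-]; exists t => //; split => //; apply: OK; split.
pose F p := projT1 (choice (loc p)).
have FP p z := projT2 (choice (loc p)) z.
have [s sc] := fin_cover cZ (D := [set i : (P * X)%type | (psi i.1 @` S i.1) i.2])
   (f := fun i => (F i.1 i.2).1)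
   (fun i Di => let: And5 o _ _ _ _ := FP i.1 i.2 Di in o)
   (fun z Zz => let: ex_intro p Vz := COV _ Zz in
     ex_intro2 _ _ (p, z) Vz (let: And5 _ h _ _ _ := FP p z Vz in h)).
exists (fun p => \big[setU/set0]_(z <- [seq i.2 | i <- s & i.1 == p] |
   `[< (psi p @` S p) z >]) (F p z).2); split.
- move=> p; split.
  + by apply: bigsetU_compact => z /asboolP Vz; case: (FP p z Vz).
  + move=> x /mem_bigU [z [_ /asboolP Vz Fx]].
    by case: (FP p z Vz) => _ _ _ + _; apply.
- move=> z Zz; have [[p z'] [si Vz' Fz]] := sc z Zz.
  exists p; have [_ _ _ _ sub] := FP p z' Vz'.
  have [t Ft tz] := sub z Fz; exists t => //.
  apply/mem_bigU; exists z'; split => //; last exact/asboolP.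
  by apply/mapP; exists (p, z') => //; rewrite mem_filter /= eqxx si.
Qed.

Definition C := proj1_sig (cid exC).
Lemma cC p : compact (C p). Proof. by have [H _] := proj2_sig (cid exC); case: (H p). Qed.
Lemma CS p : C p `<=` S p. Proof. by have [H _] := proj2_sig (cid exC); case: (H p). Qed.
Lemma covC z : Z z -> exists p, (psi p @` C p) z.
Proof. by have [_ H] := proj2_sig (cid exC); exact: H. Qed.
Lemma clC p : closed (C p). Proof. exact: (compact_closed (hT p) (cC p)). Qed.

Lemma exO p : exists Ob : set (T p), [/\ open Ob, C p `<=` Ob & compact (closure Ob)].
Proof.
have [G [oG CG _ cG]] := nbhd_cpt (hT p) (lcT p) (cC p) openT (@subsetT _ (C p)).
by exists G.
Qed.
Definition Ob p := proj1_sig (cid (exO p)).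
Lemma oOb p : open (Ob p). Proof. by case: (proj2_sig (cid (exO p))). Qed.
Lemma COb p : C p `<=` Ob p. Proof. by case: (proj2_sig (cid (exO p))). Qed.
Lemma cOb p : compact (closure (Ob p)). Proof. by case: (proj2_sig (cid (exO p))). Qed.

Definition L p q := C q `&` psi q @^-1` (psi p @` C p).

Lemma cL p q : compact (L p q).
Proof.
apply: (cpt_pre (cC q) (CS q) cont_psi).
apply: (compact_closed hX); apply: continuous_compact (cC p).
exact: continuous_subspaceW (CS p) cont_psi.
Qed.

Lemma LW p q : (q <= p)%O -> L p q `<=` W p q.
Proof. by move=> qp x [Cx [y Cy e]]; exact: (inW qp _ _ (CS _ _ Cx) (CS _ _ Cy) (esym e)). Qed.

Lemma exG p q : exists G : set (T q), (q <= p)%O ->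
  [/\ open G, L p q `<=` G, closure G `<=` W p q & compact (closure G)].
Proof.
case: (pselect (q <= p)%O) => qp; last by exists set0.
have [G HG] := nbhd_cpt (hT q) (lcT q) (cL p q) (oW qp) (LW _ _ qp).
by exists G.
Qed.
Definition G p q := proj1_sig (cid (exG p q)).
Section GP.
Context {p q : P} (qp : (q <= p)%O).
Lemma oG : open (G p q). Proof. by case: (proj2_sig (cid (exG p q)) qp). Qed.
Lemma LG : L p q `<=` G p q. Proof. by case: (proj2_sig (cid (exG p q)) qp). Qed.
Lemma clGW : closure (G p q) `<=` W p q. Proof. by case: (proj2_sig (cid (exG p q)) qp). Qed.
Lemma cG : compact (closure (G p q)). Proof. by case: (proj2_sig (cid (exG p q)) qp). Qed.
Lemma GW : G p q `<=` W p q. Proof. by move=> x Gx; apply: clGW; exact: subset_closure. Qed.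
End GP.

Definition Kn n p : set (T p) :=
  closure (Ob p) `&` [set x | exists2 c, C p c & ball c (eps n + eps n) x].
Definition Un n p : set (T p) := Ob p `&` \bigcup_(c in C p) (ball c (eps n))°.

Lemma Kn_anti n m p : (n <= m)%N -> Kn m p `<=` Kn n p.
Proof.
move=> nm x [cx [c Cc bc]]; split => //; exists c => //.
by apply: le_ball bc; apply: lerD; exact: eps_anti.
Qed.
Lemma KnO {n p x} : Kn n p x -> closure (Ob p) x. Proof. by case. Qed.
Lemma oUn n p : open (Un n p).
Proof. by apply: openI; [exact: oOb | apply: bigcup_open => c _; exact: open_interior]. Qed.
Lemma CUn n p : C p `<=` Un n p.
Proof.
move=> c Cc; split; first exact: COb.
by exists c => //; exact: nbhsx_ballx (eps_gt0 n).
Qed.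
Lemma clUn n p : closure (Un n p) `<=` Kn n p.
Proof.
move=> y cy; split; first by move: cy; apply: closureS => z [].
have [u [[_ [c Cc bu]] byu]] := cy _ (nbhsx_ballx y _ (eps_gt0 n)).
exists c => //; apply: (ball_triangle (interior_subset bu)); exact: ball_sym.
Qed.
Lemma cclUn n p : compact (closure (Un n p)).
Proof.
apply: (subclosed_compact (@closed_closure _ _) (cOb p)).
by apply: closureS => z [].
Qed.

Lemma cont_id_at {Y : topologicalType} (y : Y) : {for y, continuous (@id Y)}.
Proof. by move=> B. Qed.

Lemma lim_C {Y : topologicalType} {p} {s : nat -> Y} {y} {g : Y -> T p} :
  freq1 s y -> {for y, continuous g} -> (forall n, Kn n p (g (s n))) -> C p (g y).
Proof.
move=> fr cg H; rewrite ((closure_id (C p)).1 (clC p)).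
by apply: (lim_closure fr cg) => n; case: (H n).
Qed.

Lemma lim_cl {Y : topologicalType} {p} {s : nat -> Y} {y} {g : Y -> T p} {A : set (T p)} :
  freq1 s y -> {for y, continuous g} -> (forall n, closure A (g (s n))) ->
  closure A (g y).
Proof. by move=> fr cg H; apply: (freq1_closed fr cg (@closed_closure _ _)). Qed.

Lemma neq_lt {a b : P} : (a <= b)%O -> a != b -> ~ (b <= a)%O.
Proof. by move=> ab nab ba; move/negP: nab; apply; apply/eqP/le_anti; rewrite ab ba. Qed.

Definition P0s p q n := (q <= p)%O -> q != p -> forall x, Kn n q x ->
  closure (G p q) x -> Kn n p (phi p q x) -> G p q x.

Lemma P0_ex p q : exists n, P0s p q n.
Proof.
case: (pselect ((q <= p)%O /\ q != p)) => [[qp nqp]|H]; last first.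
  by exists 0%N => qp nqp; exfalso; apply: H.
apply: contrapT => H.
have bad n : exists x, [/\ Kn n q x, closure (G p q) x, Kn n p (phi p q x) & ~ G p q x].
  apply: contrapT => H'; apply: H; exists n => _ _ x h1 h2 h3.
  by apply: contrapT => h4; apply: H'; exists x; split.
have [s sP] := choice bad.
have [y _ fr] := cpt_freq1 (cOb q) (fun n => KnO (let: And4 k _ _ _ := sP n in k)).
have Cy : C q y := lim_C fr (cont_id_at y) (fun n => let: And4 k _ _ _ := sP n in k).
have clGy : closure (G p q) y :=
  lim_cl fr (cont_id_at y) (fun n => let: And4 _ k _ _ := sP n in k).
have Wy : W p q y := clGW qp _ clGy.
have cph := cont_at_phi qp _ Wy.
have Cpy : C p (phi p q y) := lim_C fr cph (fun n => let: And4 _ _ k _ := sP n in k).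
have Ly : L p q y.
  by split => //; exists (phi p q y) => //; rewrite (compat qp _ (CS _ _ Cy) Wy).
have Gy := LG qp _ Ly.
have [n _ Gn] := fr _ (open_nbhs_nbhs (conj (oG qp) Gy)) 0%N.
by case: (sP n) => _ _ _ /(_ Gn).
Qed.

Lemma P0_mono p q n m : (n <= m)%N -> P0s p q n -> P0s p q m.
Proof.
move=> nm H qp nqp x h1 h2 h3; apply: H => //; exact: Kn_anti h1 + exact: Kn_anti h3.
Qed.

Definition P1s p q n := (q <= p)%O -> q != p -> forall x y, Kn n q x -> S q x ->
  Kn n p y -> S p y -> psi q x = psi p y -> G p q x.

Lemma P1_ex p q : exists n, P1s p q n.
Proof.
case: (pselect ((q <= p)%O /\ q != p)) => [[qp nqp]|H]; last first.
  by exists 0%N => qp nqp; exfalso; apply: H.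
apply: contrapT => H.
have bad n : exists xy : T q * T p, [/\ Kn n q xy.1, S q xy.1, Kn n p xy.2, S p xy.2 &
   psi q xy.1 = psi p xy.2 /\ ~ G p q xy.1].
  apply: contrapT => H'; apply: H; exists n => _ _ x y h1 h2 h3 h4 h5.
  by apply: contrapT => h6; apply: H'; exists (x, y); split.
have [s sP] := choice bad.
have [y1 [y2 [_ _ fr]]] := cpt_freq2 (cOb q) (cOb p) (s1 := fun n => (s n).1)
  (s2 := fun n => (s n).2)
  (fun n => KnO (let: And5 k _ _ _ _ := sP n in k))
  (fun n => KnO (let: And5 _ _ k _ _ := sP n in k)).
have fr1 := freq2_1 fr; have fr2 := freq2_2 fr.
have Cy1 : C q y1 := lim_C fr1 (cont_id_at y1) (fun n => let: And5 k _ _ _ _ := sP n in k).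
have Cy2 : C p y2 := lim_C fr2 (cont_id_at y2) (fun n => let: And5 _ _ k _ _ := sP n in k).
have e : psi q y1 = psi p y2.
  apply: contrapT => ne; have [A [B [nA nB AB]]] := hsep hX ne.
  have n1 := within_nbhs cont_psi (CS _ _ Cy1) nA.
  have n2 := within_nbhs cont_psi (CS _ _ Cy2) nB.
  have [n _ [h1 h2]] := fr _ _ n1 n2 0%N.
  case: (sP n) => _ S1 _ S2 [en _].
  by apply: (AB (psi q (s n).1)); [exact: h1 | rewrite en; exact: h2].
have Ly : L p q y1 by split => //; exists y2.
have Gy := LG qp _ Ly.
have [n _ Gn] := fr1 _ (open_nbhs_nbhs (conj (oG qp) Gy)) 0%N.
by case: (sP n) => _ _ _ _ [_ /(_ Gn)].
Qed.

Lemma P1_mono p q n m : (n <= m)%N -> P1s p q n -> P1s p q m.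
Proof.
move=> nm H qp nqp x y h1 h2 h3 h4 h5; apply: (H qp nqp x y) => //;
  exact: Kn_anti nm _ _.
Qed.

Definition Qups a b c n := (a <= b)%O -> a != b -> (b <= c)%O -> b != c ->
  forall x, Kn n a x -> closure (G b a) x -> Kn n b (phi b a x) ->
  closure (G c b) (phi b a x) -> Kn n c (phi c b (phi b a x)) -> G c a x.

Lemma Qup_ex a b c : exists n, Qups a b c n.
Proof.
case: (pselect [/\ (a <= b)%O, a != b, (b <= c)%O & b != c]) => [[ab nab bc nbc]|H];
  last by exists 0%N => h1 h2 h3 h4; exfalso; apply: H.
have ac : (a <= c)%O := le_trans ab bc.
have nac : a != c.
  by apply/eqP => eac; subst c; exact: (neq_lt ab nab bc).
apply: contrapT => H.
have bad n : exists x, [/\ Kn n a x, closure (G b a) x, Kn n b (phi b a x),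
   closure (G c b) (phi b a x) & Kn n c (phi c b (phi b a x)) /\ ~ G c a x].
  apply: contrapT => H'; apply: H; exists n => _ _ _ _ x h1 h2 h3 h4 h5.
  by apply: contrapT => h6; apply: H'; exists x; split.
have [s sP] := choice bad.
have [y _ fr] := cpt_freq1 (cOb a) (fun n => KnO (let: And5 k _ _ _ _ := sP n in k)).
have Cy : C a y := lim_C fr (cont_id_at y) (fun n => let: And5 k _ _ _ _ := sP n in k).
have clGy : closure (G b a) y :=
  lim_cl fr (cont_id_at y) (fun n => let: And5 _ k _ _ _ := sP n in k).
have Wy : W b a y := clGW ab _ clGy.
have c1 := cont_at_phi ab _ Wy.
have Cy1 : C b (phi b a y) := lim_C fr c1 (fun n => let: And5 _ _ k _ _ := sP n in k).
have clGy1 : closure (G c b) (phi b a y) :=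
  lim_cl fr c1 (fun n => let: And5 _ _ _ k _ := sP n in k).
have Wy1 : W c b (phi b a y) := clGW bc _ clGy1.
have c2 := continuous_comp c1 (cont_at_phi bc _ Wy1).
have Cy2 : C c (phi c b (phi b a y)) :=
  lim_C fr c2 (fun n => let: And5 _ _ _ _ (conj k _) := sP n in k).
have Ly : L c a y.
  split => //; exists (phi c b (phi b a y)) => //.
  by rewrite (compat bc _ (CS _ _ Cy1) Wy1) (compat ab _ (CS _ _ Cy) Wy).
have Gy := LG ac _ Ly.
have [n _ Gn] := fr _ (open_nbhs_nbhs (conj (oG ac) Gy)) 0%N.
by case: (sP n) => _ _ _ _ [_ /(_ Gn)].
Qed.

Lemma Qup_mono a b c n m : (n <= m)%N -> Qups a b c n -> Qups a b c m.
Proof.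
move=> nm H h1 h2 h3 h4 x k1 k2 k3 k4 k5; apply: (H h1 h2 h3 h4 x) => //;
  exact: Kn_anti nm _ _.
Qed.

Definition Quds a b c n := (a <= b)%O -> a != b -> (c <= b)%O -> c != b -> a != c ->
  forall x z, Kn n a x -> closure (G b a) x -> Kn n c z -> closure (G b c) z ->
  phi b a x = phi b c z ->
  ((a <= c)%O /\ G c a x /\ phi c a x = z) \/ ((c <= a)%O /\ G a c z /\ phi a c z = x).

Lemma Qud_ex a b c : exists n, Quds a b c n.
Proof.
case: (pselect [/\ (a <= b)%O, a != b, (c <= b)%O, c != b & a != c]) =>
  [[ab nab cb ncb nac]|H]; last by exists 0%N => h1 h2 h3 h4 h5; exfalso; apply: H.
apply: contrapT => H.
have bad n : exists xz : T a * T c, [/\ Kn n a xz.1, closure (G b a) xz.1,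
   Kn n c xz.2, closure (G b c) xz.2 &
   phi b a xz.1 = phi b c xz.2 /\
   ~ (((a <= c)%O /\ G c a xz.1 /\ phi c a xz.1 = xz.2) \/
      ((c <= a)%O /\ G a c xz.2 /\ phi a c xz.2 = xz.1))].
  apply: contrapT => H'; apply: H; exists n => _ _ _ _ _ x z h1 h2 h3 h4 h5.
  by apply: contrapT => h6; apply: H'; exists (x, z); split.
have [s sP] := choice bad.
have [y1 [y2 [_ _ fr]]] := cpt_freq2 (cOb a) (cOb c) (s1 := fun n => (s n).1)
  (s2 := fun n => (s n).2)
  (fun n => KnO (let: And5 k _ _ _ _ := sP n in k))
  (fun n => KnO (let: And5 _ _ k _ _ := sP n in k)).
have fr1 := freq2_1 fr; have fr2 := freq2_2 fr.
have Cy1 : C a y1 := lim_C fr1 (cont_id_at y1) (fun n => let: And5 k _ _ _ _ := sP n in k).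
have Cy2 : C c y2 := lim_C fr2 (cont_id_at y2) (fun n => let: And5 _ _ k _ _ := sP n in k).
have clG1 : closure (G b a) y1 :=
  lim_cl fr1 (cont_id_at y1) (fun n => let: And5 _ k _ _ _ := sP n in k).
have clG2 : closure (G b c) y2 :=
  lim_cl fr2 (cont_id_at y2) (fun n => let: And5 _ _ _ k _ := sP n in k).
have W1 : W b a y1 := clGW ab _ clG1.
have W2 : W b c y2 := clGW cb _ clG2.
have c1 := cont_at_phi ab _ W1.
have c2 := cont_at_phi cb _ W2.
have e : phi b a y1 = phi b c y2.
  apply: contrapT => ne; have [A [B [nA nB AB]]] := hsep (hT b) ne.
  have [n _ [h1 h2]] := fr _ _ (cont_nbhs c1 nA) (cont_nbhs c2 nB) 0%N.
  case: (sP n) => _ _ _ _ [en _].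
  by apply: (AB (phi b a (s n).1)); [exact: h1 | rewrite en; exact: h2].
have epsi : psi a y1 = psi c y2.
  by rewrite -(compat ab _ (CS _ _ Cy1) W1) e (compat cb _ (CS _ _ Cy2) W2).
have [ac|ca] : (a <= c)%O \/ (c <= a)%O.
  by apply: CMP; exists (psi a y1); split; [exists y1 => //; exact: CS|
    rewrite epsi; exists y2 => //; exact: CS].
- have Ly : L c a y1 by split => //; exists y2.
  have Gy := LG ac _ Ly.
  have Wy := GW ac _ Gy.
  have ey : phi c a y1 = y2.
    apply: (inj_psi _ _ (mem_set (SWS ac _ (CS _ _ Cy1) Wy)) (mem_set (CS _ _ Cy2))).
    by rewrite (compat ac _ (CS _ _ Cy1) Wy).
  have nW : nbhs (phi c a y1) (W b c) by rewrite ey; apply: open_nbhs_nbhs; split => //; exact: oW.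
  have nn : nbhs y1 (G c a `&` phi c a @^-1` W b c).
    apply: filterI; first exact: open_nbhs_nbhs (conj (oG ac) Gy).
    exact: cont_nbhs (cont_at_phi ac _ Wy) nW.
  have [n _ [[Gn Wn] _]] := fr _ _ nn filterT 0%N.
  case: (sP n) => _ h2 _ h4 [en]; apply; left; split => //; split => //.
  have Wn1 : W c a (s n).1 := GW ac _ Gn.
  have := cocycle b c a ac cb (s n).1 Wn1 Wn (clGW ab _ h2).
  rewrite en => /esym; apply: (inj_phi cb _ _ (mem_set Wn)).
  by apply: mem_set; exact: clGW cb _ h4.
- have Ly : L a c y2 by split => //; exists y1.
  have Gy := LG ca _ Ly.
  have Wy := GW ca _ Gy.
  have ey : phi a c y2 = y1.
    apply: (inj_psi _ _ (mem_set (SWS ca _ (CS _ _ Cy2) Wy)) (mem_set (CS _ _ Cy1))).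
    by rewrite (compat ca _ (CS _ _ Cy2) Wy).
  have nW : nbhs (phi a c y2) (W b a) by rewrite ey; apply: open_nbhs_nbhs; split => //; exact: oW.
  have nn : nbhs y2 (G a c `&` phi a c @^-1` W b a).
    apply: filterI; first exact: open_nbhs_nbhs (conj (oG ca) Gy).
    exact: cont_nbhs (cont_at_phi ca _ Wy) nW.
  have [n _ [_ [Gn Wn]]] := fr _ _ filterT nn 0%N.
  case: (sP n) => _ h2 _ h4 [en]; apply; right; split => //; split => //.
  have Wn1 : W a c (s n).2 := GW ca _ Gn.
  have := cocycle b a c ca ab (s n).2 Wn1 Wn (clGW cb _ h4).
  rewrite -en => /esym; apply: (inj_phi ab _ _ (mem_set Wn)).
  by apply: mem_set; exact: clGW ab _ h2.
Qed.

Lemma Qud_mono a b c n m : (n <= m)%N -> Quds a b c n -> Quds a b c m.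
Proof.
move=> nm H h1 h2 h3 h4 h5 x z k1 k2 k3 k4 k5; apply: (H h1 h2 h3 h4 h5 x z) => //;
  exact: Kn_anti nm _ _.
Qed.

Definition Qdus a b c n := (b <= a)%O -> b != a -> (b <= c)%O -> b != c -> a != c ->
  forall y, Kn n b y -> closure (G a b) y -> closure (G c b) y ->
  Kn n a (phi a b y) -> Kn n c (phi c b y) ->
  ((a <= c)%O /\ G c a (phi a b y) /\ phi c a (phi a b y) = phi c b y) \/
  ((c <= a)%O /\ G a c (phi c b y) /\ phi a c (phi c b y) = phi a b y).

Lemma Qdu_ex a b c : exists n, Qdus a b c n.
Proof.
case: (pselect [/\ (b <= a)%O, b != a, (b <= c)%O, b != c & a != c]) =>
  [[ba nba bc nbc nac]|H]; last by exists 0%N => h1 h2 h3 h4 h5; exfalso; apply: H.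
apply: contrapT => H.
have bad n : exists y, [/\ Kn n b y, closure (G a b) y, closure (G c b) y,
   Kn n a (phi a b y) & Kn n c (phi c b y) /\
   ~ (((a <= c)%O /\ G c a (phi a b y) /\ phi c a (phi a b y) = phi c b y) \/
  ((c <= a)%O /\ G a c (phi c b y) /\ phi a c (phi c b y) = phi a b y))].
  apply: contrapT => H'; apply: H; exists n => _ _ _ _ _ y h1 h2 h3 h4 h5.
  by apply: contrapT => h6; apply: H'; exists y; split.
have [s sP] := choice bad.
have [y _ fr] := cpt_freq1 (cOb b) (fun n => KnO (let: And5 k _ _ _ _ := sP n in k)).
have Cy : C b y := lim_C fr (cont_id_at y) (fun n => let: And5 k _ _ _ _ := sP n in k).
have clGa : closure (G a b) y :=
  lim_cl fr (cont_id_at y) (fun n => let: And5 _ k _ _ _ := sP n in k).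
have clGc : closure (G c b) y :=
  lim_cl fr (cont_id_at y) (fun n => let: And5 _ _ k _ _ := sP n in k).
have Wa : W a b y := clGW ba _ clGa.
have Wc : W c b y := clGW bc _ clGc.
have ca := cont_at_phi ba _ Wa.
have cc := cont_at_phi bc _ Wc.
have Cx : C a (phi a b y) := lim_C fr ca (fun n => let: And5 _ _ _ k _ := sP n in k).
have Cz : C c (phi c b y) :=
  lim_C fr cc (fun n => let: And5 _ _ _ _ (conj k _) := sP n in k).
have epsi : psi a (phi a b y) = psi c (phi c b y).
  by rewrite (compat ba _ (CS _ _ Cy) Wa) (compat bc _ (CS _ _ Cy) Wc).
have [ac|ca'] : (a <= c)%O \/ (c <= a)%O.
  by apply: CMP; exists (psi a (phi a b y)); split; [exists (phi a b y) => //; exact: CS|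
    rewrite epsi; exists (phi c b y) => //; exact: CS].
- have Ly : L c a (phi a b y) by split => //; exists (phi c b y).
  have Gy := LG ac _ Ly.
  have [n _ Gn] := fr _ (cont_nbhs ca (open_nbhs_nbhs (conj (oG ac) Gy))) 0%N.
  case: (sP n) => _ h2 h3 _ [_]; apply; left; split => //; split => //.
  by rewrite -(cocycle c a b ba ac (s n) (clGW ba _ h2) (GW ac _ Gn) (clGW bc _ h3)).
- have Ly : L a c (phi c b y) by split => //; exists (phi a b y).
  have Gy := LG ca' _ Ly.
  have [n _ Gn] := fr _ (cont_nbhs cc (open_nbhs_nbhs (conj (oG ca') Gy))) 0%N.
  case: (sP n) => _ h2 h3 _ [_]; apply; right; split => //; split => //.
  by rewrite -(cocycle a c b bc ca' (s n) (clGW bc _ h3) (GW ca' _ Gn) (clGW ba _ h2)).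
Qed.

Lemma Qdu_mono a b c n m : (n <= m)%N -> Qdus a b c n -> Qdus a b c m.
Proof.
move=> nm H h1 h2 h3 h4 h5 y k1 k2 k3 k4 k5; apply: (H h1 h2 h3 h4 h5 y) => //;
  exact: Kn_anti nm _ _.
Qed.

Definition Good n := forall i : (P * P * P)%type,
  [/\ P0s i.1.1 i.1.2 n, P1s i.1.1 i.1.2 n, Qups i.1.1 i.1.2 i.2 n,
      Quds i.1.1 i.1.2 i.2 n & Qdus i.1.1 i.1.2 i.2 n].

Lemma Good_ex : exists n, Good n.
Proof.
apply: fin_max.
  move=> i n m nm [h1 h2 h3 h4 h5]; split;
  [exact: P0_mono h1|exact: P1_mono h2|exact: Qup_mono h3|exact: Qud_mono h4|
   exact: Qdu_mono h5].
move=> [[a b] c] /=.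
have [n1 h1] := P0_ex a b; have [n2 h2] := P1_ex a b; have [n3 h3] := Qup_ex a b c.
have [n4 h4] := Qud_ex a b c; have [n5 h5] := Qdu_ex a b c.
exists (maxn n1 (maxn n2 (maxn n3 (maxn n4 n5)))); split.
- by apply: P0_mono h1; lia.
- by apply: P1_mono h2; lia.
- by apply: Qup_mono h3; lia.
- by apply: Qud_mono h4; lia.
- by apply: Qdu_mono h5; lia.
Qed.

Definition N0 : nat := proj1_sig (cid Good_ex).
Lemma good : Good N0. Proof. exact: (proj2_sig (cid Good_ex)). Qed.
Definition U0 p := Un N0 p.
Definition W0 p q : set (T q) :=
  if q == p then U0 q else U0 q `&` G p q `&` phi p q @^-1` U0 p.
Definition Kc p := closure (U0 p).
Definition Wc p q : set (T q) :=
  if q == p then Kc q else Kc q `&` closure (G p q) `&` phi p q @^-1` Kc p.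

Lemma W0E p q : q != p -> W0 p q = U0 q `&` G p q `&` phi p q @^-1` U0 p.
Proof. by move=> nqp; rewrite /W0 (negbTE nqp). Qed.
Lemma W0pp p : W0 p p = U0 p. Proof. by rewrite /W0 eqxx. Qed.
Lemma WcE p q : q != p -> Wc p q = Kc q `&` closure (G p q) `&` phi p q @^-1` Kc p.
Proof. by move=> nqp; rewrite /Wc (negbTE nqp). Qed.
Lemma Wcpp p : Wc p p = Kc p. Proof. by rewrite /Wc eqxx. Qed.

Lemma U0Kc p : U0 p `<=` Kc p. Proof. exact: subset_closure. Qed.
Lemma KcKn p : Kc p `<=` Kn N0 p. Proof. exact: clUn. Qed.
Lemma U0Kn p : U0 p `<=` Kn N0 p. Proof. by move=> x /U0Kc /KcKn. Qed.
Lemma oU0 p : open (U0 p). Proof. exact: oUn. Qed.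
Lemma clKc p : closed (Kc p). Proof. exact: closed_closure. Qed.
Lemma cKc p : compact (Kc p). Proof. exact: cclUn. Qed.

Lemma oW0 {p q} : (q <= p)%O -> open (W0 p q).
Proof.
move=> qp; case: (eqVneq q p) => [eqp|nqp].
  by subst q; rewrite W0pp; exact: oU0.
rewrite W0E //.
have h : open (W p q `&` phi p q @^-1` U0 p).
  have := cont_phi qp; rewrite (continuous_open_subspace _ (oW qp)).
  by move/(continuous_inP _ (oW qp)); apply; exact: oU0.
have -> : U0 q `&` G p q `&` phi p q @^-1` U0 p =
    U0 q `&` G p q `&` (W p q `&` phi p q @^-1` U0 p).
  apply/seteqP; split => x [[U0x Gx] h1]; split => //.
    by split => //; exact: GW qp _ Gx.
  by case: h1.
by apply: openI => //; apply: openI; [exact: oU0|exact: oG qp].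
Qed.

Lemma W0W {p q} : (q <= p)%O -> W0 p q `<=` W p q.
Proof.
move=> qp x; case: (eqVneq q p) => [eqp|nqp].
  by subst q; rewrite Wpp.
by rewrite W0E // => -[[_ Gx] _]; exact: GW qp _ Gx.
Qed.

Lemma W0Wc {p q} : W0 p q `<=` Wc p q.
Proof.
move=> x; case: (eqVneq q p) => [eqp|nqp].
  by subst q; rewrite W0pp Wcpp; exact: U0Kc.
rewrite W0E // WcE // => -[[U0x Gx] U0y]; split; [split|].
- exact: U0Kc.
- exact: subset_closure.
- exact: U0Kc.
Qed.

Lemma weak0 : gcs_weak Z U0 (fun p => S p `&` U0 p) psi W0 phi.
Proof.
split.
- move=> p; split.
  + exact: slc_open (hT p) (lcT p) (oU0 p).
  + exact: sep_open (sepT p) (oU0 p).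
  + split; first by move=> x [].
    by exists (S p); split; [exact: clS|rewrite setIC].
  + exact: emb_sub (emb_psi p) (oU0 p).
  + case: (emb_psi p) => _ _ /(_ _ (oU0 p)) [V1 [oV1 ->]].
    exact: openI (oV p) oV1.
- move=> p q qp; apply: cc_restrict (CC qp) (oW0 qp) _ _.
  + move=> x W0x; case: (eqVneq q p) => [eqp|nqp].
      subst q; rewrite W0pp in W0x; split; [split|] => //; first by rewrite Wpp.
      by rewrite /= phipp.
    move: (W0x); rewrite W0E // => -[[U0x Gx] U0y]; split; [split|] => //.
    exact: W0W.
  + move=> x y Sx U0x Sy U0y e; case: (eqVneq q p) => [eqp|nqp].
      by subst q; rewrite W0pp.
    have [_ h _ _ _] := good (p, q, p).
    have Gx : G p q x := h qp nqp x y (U0Kn _ _ U0x) Sx (U0Kn _ _ U0y) Sy e.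
    have Wx := GW qp _ Gx.
    have Sphi := SWS qp _ Sx Wx.
    have ey : phi p q x = y.
      apply: (inj_psi _ _ (mem_set Sphi) (mem_set Sy)).
      by rewrite (compat qp _ Sx Wx).
    by rewrite W0E //; split; [split|] => //; rewrite /= ey.
- move=> p; split; first exact: W0pp.
  by move=> x _; exact: phipp.
- move=> p q r rq qp x h1 h2 h3; apply: cocycle => //.
  + exact: W0W rq _ h1.
  + exact: W0W qp _ h2.
  + exact: W0W (le_trans rq qp) _ h3.
- split.
  + move=> p q [z [[x [Sx _] ex] [y [Sy _] ey]]]; apply: CMP.
    by exists z; split; [exists x|exists y].
  + move=> z Zz; have [p [c Cc <-]] := covC _ Zz; exists p; exists c => //.
    by split; [exact: CS|exact: CUn].
Qed.

Lemma rel_mono (W1 W2 : forall p q : P, set (T q)) x y :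
  (forall p q, W1 p q `<=` W2 p q) -> gcs_rel W1 phi x y -> gcs_rel W2 phi x y.
Proof.
move=> sub; case=> [->|[[h1 [h2 h3]]|[h1 [h2 h3]]]]; first by left.
- by right; left; split => //; split => //; exact: sub.
- by right; right; split => //; split => //; exact: sub.
Qed.

Lemma rel_sym (W1 : forall p q : P, set (T q)) x y :
  gcs_rel W1 phi x y -> gcs_rel W1 phi y x.
Proof. by case=> [->|[h|h]]; [left|right; right|right; left]. Qed.

Lemma rel_cases {a b u v} : gcs_rel Wc phi (existT _ a u) (existT _ b v) ->
  existT _ a u = existT _ b v \/
  ((a <= b)%O /\ a != b /\ Wc b a u /\ v = phi b a u) \/
  ((b <= a)%O /\ b != a /\ Wc a b v /\ u = phi a b v).
Proof.
case=> [e|[[/= ab [h e]]|[/= ba [h e]]]]; first by left.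
- case: (eqVneq a b) => [eab|nab]; last by right; left.
  by subst b; left; rewrite e phipp.
- case: (eqVneq b a) => [eba|nba]; last by right; right.
  by subst b; left; rewrite e phipp.
Qed.

Lemma rel_back x y : in_union U0 x -> in_union U0 y ->
  gcs_rel Wc phi x y -> gcs_rel W0 phi x y.
Proof.
case: x => a u; case: y => b v; rewrite /in_union /= => Ua Ub.
move=> /rel_cases [e|[[ab [nab [h e]]]|[ba [nba [h e]]]]]; first by left.
- have nba : b != a by rewrite eq_sym.
  have [h0 _ _ _ _] := good (b, a, b).
  move: (h); rewrite WcE // => -[[Ku clGu] Kv].
  have Gu := h0 ab nab u (KcKn _ _ Ku) clGu (KcKn _ _ Kv).
  right; left; split => //; split => //=.
  by rewrite W0E //; split; [split|] => //; rewrite /= -e.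
- have nab : a != b by rewrite eq_sym.
  have [h0 _ _ _ _] := good (a, b, a).
  move: (h); rewrite WcE // => -[[Kv clGv] Ku].
  have Gv := h0 ba nba v (KcKn _ _ Kv) clGv (KcKn _ _ Ku).
  right; right; split => //; split => //=.
  by rewrite W0E //; split; [split|] => //; rewrite /= -e.
Qed.

Lemma up_up a b c u : (a <= b)%O -> a != b -> (b <= c)%O -> b != c ->
  Wc b a u -> Wc c b (phi b a u) ->
  gcs_rel Wc phi (existT _ a u) (existT _ c (phi c b (phi b a u))).
Proof.
move=> ab nab bc nbc.
have ac : (a <= c)%O := le_trans ab bc.
have nac : a != c.
  by apply/eqP => eac; subst c; exact: (neq_lt ab nab bc).
rewrite !WcE ?[_ == b]eq_sym ?[_ == a]eq_sym // => -[[Ku clGu] Kv] -[[_ clGv] Kw].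
have [_ _ h _ _] := good (a, b, c).
have Gu : G c a u :=
  h ab nab bc nbc u (KcKn _ _ Ku) clGu (KcKn _ _ Kv) clGv (KcKn _ _ Kw).
have ecoc := cocycle c b a ab bc u (clGW ab _ clGu) (clGW bc _ clGv) (GW ac _ Gu).
right; left; split => //; split => //=.
rewrite WcE ?[_ == a]eq_sym //; split; [split|] => //.
- exact: subset_closure.
- by rewrite /= ecoc.
Qed.

Lemma rel_trans x y z : gcs_rel Wc phi x y -> gcs_rel Wc phi y z ->
  gcs_rel Wc phi x z.
Proof.
case: x => a u; case: y => b v; case: z => c w => r1 r2.
case: (rel_cases r1) => [e1|[[ab [nab [h1 e1]]]|[ba [nba [h1 e1]]]]].
  by rewrite e1.
- case: (rel_cases r2) => [e2|[[bc [nbc [h2 e2]]]|[cb [ncb [h2 e2]]]]].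
  + by rewrite -e2.
  + rewrite e2 e1; apply: up_up => //; by rewrite -e1.
  + move: (h1); rewrite WcE ?[_ == a]eq_sym // => -[[Ku clGu] _].
    move: (h2); rewrite WcE ?[_ == c]eq_sym // => -[[Kw clGw] _].
    have e : phi b a u = phi b c w by rewrite -e1 -e2.
    case: (eqVneq a c) => [eac|nac].
      subst c; left; congr existT.
      by apply: (inj_phi ab _ _ (mem_set (clGW ab _ clGu)) (mem_set (clGW ab _ clGw))).
    have [_ _ _ h _] := good (a, b, c).
    case: (h ab nab cb ncb nac u w (KcKn _ _ Ku) clGu (KcKn _ _ Kw) clGw e) =>
      [[ac [Gu eu]]|[ca [Gw ew]]].
    * right; left; split => //; split => //=; try by rewrite eu.
      rewrite WcE ?[_ == a]eq_sym //; split; [split|] => //; first exact: subset_closure.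
      by rewrite /= eu.
    * right; right; split => //; split => //=; try by rewrite ew.
      rewrite WcE ?[_ == c]eq_sym // 1?eq_sym //; split; [split|] => //; first exact: subset_closure.
      by rewrite /= ew.
- case: (rel_cases r2) => [e2|[[bc [nbc [h2 e2]]]|[cb [ncb [h2 e2]]]]].
  + by rewrite -e2.
  + move: (h1); rewrite WcE // => -[[Kv clGa] Ka].
    move: (h2); rewrite WcE // => -[[_ clGc] Kc'].
    case: (eqVneq a c) => [eac|nac].
      by subst c; left; rewrite e1 e2.
    have [_ _ _ _ h] := good (a, b, c).
    case: (h ba nba bc nbc nac v (KcKn _ _ Kv) clGa clGc (KcKn _ _ Ka) (KcKn _ _ Kc'))
      => [[ac [Gu eu]]|[ca [Gw ew]]].
    * rewrite e1 e2; right; left; split => //; split => //=; try by rewrite eu.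
      rewrite WcE; last by apply/eqP => eca; subst c; rewrite eqxx in nac.
      by split; [split|] => //; [exact: subset_closure|rewrite /= eu].
    * rewrite e1 e2; right; right; split => //; split => //=; try by rewrite ew.
      rewrite WcE; last by apply/eqP => eca; subst c; rewrite eqxx in nac.
      by split; [split|] => //; [exact: subset_closure|rewrite /= ew].
  + apply: rel_sym; rewrite e1 e2; apply: up_up => //; by rewrite -e2.
Qed.

Lemma equiv0 : gcs_equiv U0 W0 phi.
Proof.
move=> x y z Ux _ Uz r1 r2; apply: rel_back => //.
have sub : forall p q, W0 p q `<=` Wc p q := fun p q => @W0Wc p q.
exact: (rel_trans x y z (rel_mono _ _ _ _ sub r1) (rel_mono _ _ _ _ sub r2)).
Qed.

Lemma existT_inj {a} {u w : T a} : existT (fun p => T p) a u = existT _ a w -> u = w.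
Proof. exact: (inj_pair2_eq_dec P (fun x y => decP eqP)). Qed.

Lemma existT_fst {a c} {u : T a} {w : T c} :
  existT (fun p => T p) a u = existT _ c w -> a = c.
Proof. by move=> e; have := congr1 (@projT1 _ _) e. Qed.

Definition satf (E : set {p : P & T p}) c : set (T c) :=
  [set w | Kc c w /\ exists e, E e /\ gcs_rel Wc phi e (existT _ c w)].

Lemma sat_closed E c : (forall a, closed [set u | E (existT _ a u)]) ->
  closed (satf E c).
Proof.
move=> cE.
pose piece a := [set w : T c | Kc c w /\ exists u, E (existT _ a u) /\
   gcs_rel Wc phi (existT _ a u) (existT _ c w)].
have -> : satf E c = \bigcup_(a in [set: P]) piece a.
  apply/seteqP; split => w.
    by move=> [Kw [[a u] [Ee r]]]; exists a => //; split => //; exists u.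
  by move=> [a _ [Kw [u [Ee r]]]]; split => //; exists (existT _ a u).
apply: closed_bigcup; first exact: finite_finset.
move=> a _.
case: (eqVneq a c) => [eac|nac].
  subst a.
  have -> : piece c = Kc c `&` [set w | E (existT _ c w)].
    apply/seteqP; split => w.
      move=> [Kw [u [Eu /rel_cases [e|[[_ [/eqP //]]|[_ [/eqP //]]]]]]].
      by split => //; rewrite -(existT_inj e).
    by move=> [Kw Ew]; split => //; exists w; split => //; left.
  exact: closedI (clKc c) (cE c).
have nca : c != a by rewrite eq_sym.
case: (pselect (a <= c)%O) => ac.
  have -> : piece a = phi c a @` ([set u | E (existT _ a u)] `&` Wc c a) `&` Kc c.
    apply/seteqP; split => w.
      move=> [Kw [u [Eu /rel_cases [e|[[_ [_ [h e]]]|[ca [_ _]]]]]]].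
      - by move: nac; rewrite (existT_fst e) eqxx.
      - by split => //; exists u.
      - by exfalso; exact: (neq_lt ac nac ca).
    move=> [[u [Eu Wu] <-] Kw]; split => //; exists u; split => //.
    by right; left; split.
  apply: closedI (clKc c); apply: (compact_closed (hT c)).
  have sub : [set u | E (existT _ a u)] `&` Wc c a `<=` W c a.
    by rewrite WcE // => u [_ [[_ /(clGW ac)]]].
  apply: continuous_compact; first exact: continuous_subspaceW sub (cont_phi ac).
  have -> : [set u | E (existT _ a u)] `&` Wc c a =
     (closure (G c a) `&` (Kc a `&` [set u | E (existT _ a u)])) `&` phi c a @^-1` Kc c.
    rewrite WcE //; apply/seteqP; split => u.
      by move=> [Eu [[Ku clGu] Kpu]].
    by move=> [[clGu [Ku Eu]] Kpu].
  apply: cpt_pre (cont_phi ac) (clKc c).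
  - exact: compact_closedI (cG ac) (closedI (clKc a) (cE a)).
  - by move=> u [/(clGW ac)].
case: (pselect (c <= a)%O) => ca.
  have -> : piece a = (closure (G a c) `&` Kc c) `&`
      phi a c @^-1` (Kc a `&` [set u | E (existT _ a u)]).
    apply/seteqP; split => w.
      move=> [Kw [u [Eu /rel_cases [e|[[ac' _]|[_ [_ [h e]]]]]]]].
      - by move: nac; rewrite (existT_fst e) eqxx.
      - by exfalso; exact: ac ac'.
      - move: (h); rewrite WcE // => -[[_ clGw] Ka].
        by split => //; split => //=; rewrite -e.
    move=> [[clGw Kw] [Ka Ew]]; split => //; exists (phi a c w); split => //.
    right; right; split => //; split => //.
    by rewrite WcE //; try by split; [split|].
  apply: (compact_closed (hT c)); apply: cpt_pre (cont_phi ca) _.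
  - exact: compact_closedI (cG ca) (clKc c).
  - by move=> u [/(clGW ca)].
  - exact: closedI (clKc a) (cE a).
have -> : piece a = set0.
  apply/seteqP; split => // w [Kw [u [Eu /rel_cases [e|[[ac' _]|[ca' _]]]]]].
  - by move: nac; rewrite (existT_fst e) eqxx.
  - exact: ac ac'.
  - exact: ca ca'.
exact: closed0.
Qed.

Lemma sigT_eta' (x : {p : P & T p}) : existT (fun p => T p) (projT1 x) (projT2 x) = x.
Proof. by case: x. Qed.

Lemma single_closed (x : {p : P & T p}) a :
  closed [set u : T a | existT (fun p => T p) a u = x].
Proof.
case: x => b v; case: (eqVneq a b) => [eab|nab].
  subst b; have -> : [set u : T a | existT (fun p => T p) a u = existT _ a v] = [set v].
    apply/seteqP; split => u; first by move/existT_inj.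
    by move=> ->.
  exact: compact_closed (hT a) (@compact_set1 _ v).
have -> : [set u : T a | existT (fun p => T p) a u = existT _ b v] = set0.
  apply/seteqP; split => // u /existT_fst eab.
  by rewrite eab eqxx in nab.
exact: closed0.
Qed.

Lemma haus0 : gcs_quotient_hausdorff U0 W0 phi.
Proof.
move=> x y Ux Uy nr.
have nR : ~ gcs_rel Wc phi x y by move=> r; apply: nr; exact: rel_back.
pose Cx c := satf [set e | e = x] c.
pose Cy c := satf [set e | e = y] c.
have disj c : Cx c `&` Cy c = set0.
  apply/seteqP; split => // w [[_ [e [-> r1]]] [_ [e' [-> r2]]]].
  by apply: nR; apply: (rel_trans _ _ _ r1); apply: rel_sym.
have cpt (z : {p : P & T p}) c : compact (satf [set e | e = z] c).
  apply: (subclosed_compact _ (cKc c)); last by move=> w [].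
  by apply: sat_closed => a; exact: single_closed.
have sepc c : exists V : set (T c) * set (T c),
    [/\ open V.1, open V.2, Cx c `<=` V.1, Cy c `<=` V.2 & V.1 `&` V.2 = set0].
  have [VA [VB [h1 h2 h3 h4 h5]]] := sep_cpt (hT c) (lcT c) (cpt x c) (cpt y c) (disj c).
  by exists (VA, VB).
pose V c := proj1_sig (cid (sepc c)).
have VP c := proj2_sig (cid (sepc c)).
pose Ex : set {p : P & T p} := [set e | Kc (projT1 e) (projT2 e) /\ ~ (V (projT1 e)).1 (projT2 e)].
pose Ey : set {p : P & T p} := [set e | Kc (projT1 e) (projT2 e) /\ ~ (V (projT1 e)).2 (projT2 e)].
have clEx a : closed [set u | Ex (existT _ a u)].
  apply: closedI (clKc a) _; apply: open_closedC; by case: (VP a).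
have clEy a : closed [set u | Ey (existT _ a u)].
  apply: closedI (clKc a) _; apply: open_closedC; by case: (VP a).
pose A : set {p : P & T p} := [set e | in_union U0 e /\ ~ satf Ex (projT1 e) (projT2 e)].
pose B : set {p : P & T p} := [set e | in_union U0 e /\ ~ satf Ey (projT1 e) (projT2 e)].
have satA E (F : set {p : P & T p}) : (forall c, closed (satf F c)) ->
   union_open U0 [set e | in_union U0 e /\ ~ satf F (projT1 e) (projT2 e)] /\
   saturated U0 W0 phi [set e | in_union U0 e /\ ~ satf F (projT1 e) (projT2 e)].
  move=> cF; split.
    split; first by move=> e [].
    move=> c; exists (~` satf F c); split; first exact: closed_openC.
    by apply/seteqP; split => u [].
  case=> a u; case=> b v Ua Ub [_ nSa] r; split => // -[Kv [e [Fe r2]]].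
  apply: nSa; split; first exact: U0Kc.
  exists e; split => //; apply: (rel_trans _ _ _ r2); apply: rel_sym.
  by apply: (rel_mono _ _ _ _ (fun p q => @W0Wc p q) r).
exists A, B; split.
- exact: satA (fun c => sat_closed Ex c clEx).
- exact: satA (fun c => sat_closed Ey c clEy).
- split => //; move=> [_ [[c w] [[Kw nVw] r]]]; rewrite sigT_eta' in r.
  apply: nVw; case: (VP c) => _ _ + _ _; apply; split => //.
  by exists x; split => //; exact: rel_sym r.
- split => //; move=> [_ [[c w] [[Kw nVw] r]]]; rewrite sigT_eta' in r.
  apply: nVw; case: (VP c) => _ _ _ + _; apply; split => //.
  by exists y; split => //; exact: rel_sym r.
- apply/seteqP; split => // -[c w] [[Uw nSx] [_ nSy]].
  have V1 : (V c).1 w.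
    apply: contrapT => nV; apply: nSx; split; first exact: U0Kc.
    by exists (existT _ c w); split; [split => //; exact: U0Kc | left].
  have V2 : (V c).2 w.
    apply: contrapT => nV; apply: nSy; split; first exact: U0Kc.
    by exists (existT _ c w); split; [split => //; exact: U0Kc | left].
  case: (VP c) => _ _ _ _ e.
  have : ((V c).1 `&` (V c).2) w by split.
  by rewrite e.
Qed.


Lemma main_sec : exists (U0' : forall p, set (T p)) (W0' : forall p q : P, set (T q)),
  [/\ (forall p, shrinking_of (U0' p) setT),
      (forall p q : P, (q <= p)%O -> shrinking_of (W0' p q) (W p q)) &
      gcs_strong Z U0' (fun p => S p `&` U0' p) psi W0' phi].
Proof.
exists U0, W0; split.
- move=> p; split => //; first by exists (U0 p); split; [exact: oU0|rewrite setTI].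
  by rewrite setIT; exact: cKc.
- move=> p q qp; case: (eqVneq q p) => [eqp|nqp].
    subst q; rewrite W0pp Wpp; split => //.
      by exists (U0 p); split; [exact: oU0|rewrite setTI].
    by rewrite setIT; exact: cKc.
  split.
  + exact: W0W qp.
  + exists (W0 p q); split; first exact: oW0 qp.
    by apply/esym/setIidr; exact: W0W qp.
  + have sub : closure (W0 p q) `<=` closure (G p q).
      by apply: closureS; rewrite W0E // => x [[]].
    rewrite setIidl; last by move=> x /sub /(clGW qp).
    exact: subclosed_compact (@closed_closure _ _) (cG qp) sub.
- split; [exact: weak0|exact: equiv0|exact: haus0].
Qed.

End Main.

Theorem theorem2p9 (R : realType) (dP : Order.disp_t) (P : finPOrderType dP)
  (T : P -> pseudoMetricType R) (X : pseudoMetricType R) (Z : set X)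
  (S : forall p, set (T p)) (psi : forall p, T p -> X)
  (W : forall p q : P, set (T q)) (phi : forall p q : P, T q -> T p) :
  hausdorff_space X -> sub_locally_compact (@setT X) ->
  sub_separable (@setT X) ->
  (forall p, hausdorff_space (T p)) ->
  compact Z ->
  gcs_weak Z (fun p => @setT (T p)) S psi W phi ->
  exists (U0 : forall p, set (T p)) (W0 : forall p q : P, set (T q)),
    [/\ (forall p, shrinking_of (U0 p) setT),
        (forall p q : P, (q <= p)%O -> shrinking_of (W0 p q) (W p q)) &
        gcs_strong Z U0 (fun p => S p `&` U0 p) psi W0 phi].
Proof. by move=> hX _ _ hT cZ gw; exact: main_sec. Qed.
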